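(* In the setting described in the context, the matrices $\boldsymbol{\Psi}\in\mathbb{C}^{(2D-2)\times(2D-2)}$ and $\mathbf{F}\in\mathbb{C}^{(M^2-M)\times(M^2-M)}$ are non-singular, and $\overline{\mathbf{J}}\in\{0,1\}^{(M^2-M)\times(2D-2)}$ has full column rank.
   Context: Let $\{m_1,\dots,m_M\}$ be $M$ distinct integers, $\mathbb{D}=\{|m_p-m_q|:1\le p,q\le M\}=\{\ell_0,\dots,\ell_{D-1}\}$ with $0=\ell_0<\ell_1<\dots<\ell_{D-1}$. For $0\le n\le D-1$ let $\mathbf{L}_n\in\{0,1\}^{M\times M}$ with $[\mathbf{L}_n]_{p,q}=1$ if $m_p-m_q=\ell_n$ and $0$ otherwise. Let $\mathbf{J}=[\mathrm{vec}(\mathbf{L}_{D-1}^T),\dots,\mathrm{vec}(\mathbf{L}_1^T),\mathrm{vec}(\mathbf{L}_0),\mathrm{vec}(\mathbf{L}_1),\dots,\mathrm{vec}(\mathbf{L}_{D-1})]\in\{0,1\}^{M^2\times(2D-1)}$ ($\mathrm{vec}$ stacks columns). The indices $(i-1)M+i$, $1\le i\le M$, are the positions of the diagonal entries in $\mathrm{vec}$ of an $M\times M$ matrix. $\overline{\mathbf{J}}$ is obtained from $\mathbf{J}$ by removing its $D$-th column and its rows with indices $(i-1)M+i$, $1\le i\le M$. $\boldsymbol{\Psi}=\begin{bmatrix}\mathbf{I}_{D-1}&-j\mathbf{I}_{D-1}\\ \mathbf{I}_{D-1}&j\mathbf{I}_{D-1}\end{bmatrix}$. Let $\overline{\mathbf{e}}_p\in\mathbb{R}^M$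 be the $p$-th standard basis vector. For $1\le p<q\le M$ set $s(p,q)=(p-1)M+q-\frac{p(p+1)}{2}\in\{1,\dots,\frac{M^2-M}{2}\}$. Define $\ddot{\mathbf{F}},\widetilde{\mathbf{F}}\in\{0,\pm1\}^{\frac{M^2-M}{2}\times(M^2-M)}$ by: row $s(p,q)$ of $\ddot{\mathbf{F}}$ (resp. $\widetilde{\mathbf{F}}$) is obtained from the row vector $\overline{\mathbf{e}}_p^T\otimes\overline{\mathbf{e}}_q^T+\overline{\mathbf{e}}_q^T\otimes\overline{\mathbf{e}}_p^T$ (resp. $\overline{\mathbf{e}}_p^T\otimes\overline{\mathbf{e}}_q^T-\overline{\mathbf{e}}_q^T\otimes\overline{\mathbf{e}}_p^T$) by removing its entries with indices $(i-1)M+i$, $1\le i\le M$. Finally $\mathbf{F}=\frac12\begin{bmatrix}\ddot{\mathbf{F}}\\ j\widetilde{\mathbf{F}}\end{bmatrix}$. *)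

(* Defs.v *)
From HB Require Import structures.
From mathcomp Require Import all_boot all_order all_algebra.
From mathcomp Require Import algC.
Set Implicit Arguments. Unset Strict Implicit. Unset Printing Implicit Defensive.
Import Order.TTheory GRing.Theory Num.Theory.
Local Open Scope ring_scope.

Section Defs.
Variables (M : nat) (m : 'I_M -> int).

(* m extended to nat indices (0-based), value 0 outside [0,M) *)
Definition mn (i : nat) : int := if insub i is Some p then m p else 0.

(* the sorted list 0 = ell_0 < ... < ell_{D-1} of distinct |m_p - m_q| *)
Definition ells : seq nat :=
  sort leq (undup [seq `|m p - m q|%N | p <- enum 'I_M, q <- enum 'I_M]).
Definition Dnum : nat := size ells.
Definition ell (n : nat) : nat := nth 0%N ells n.

Definition Lf (n i j : nat) : algC := (mn i - mn j == (ell n)%:Z)%:R.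
Definition Lmx (n : nat) : 'M[algC]_M := \matrix_(i, j) Lf n i j.

(* vec (column stacking), 0-based: entry k of vec(A) is A (k %% M) (k %/ M) *)
Definition vecf (f : nat -> nat -> algC) (k : nat) : algC := f (k %% M)%N (k %/ M)%N.

Definition Jcol (c : nat) : nat -> algC :=
  if (c < Dnum.-1)%N then vecf (fun i j => Lf (Dnum.-1 - c) j i)
  else vecf (Lf (c - Dnum.-1)).

Definition Jmx : 'M[algC]_(M * M, (2 * Dnum).-1) := \matrix_(k, c) Jcol c k.

Definition offd : seq nat := [seq k <- iota 0 (M * M) | (k %% M != k %/ M)%N].

(* Jbar: J with its D-th column (0-based index D-1) and diagonal rows removed *)
Definition Jbar : 'M[algC]_(M * M - M, 2 * Dnum - 2) :=
  \matrix_(r, c) Jcol (if (c < Dnum.-1)%N then (c : nat) else (c : nat).+1) (nth 0%N offd r).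

End Defs.

Definition Psi (D : nat) : 'M[algC]_(D.-1 + D.-1) :=
  block_mx 1%:M (- 'i) %:M 1%:M 'i%:M.

Definition hF (M : nat) : nat := ((M * M - M) %/ 2)%N.

Lemma hF_double M : (hF M + hF M = M * M - M)%N.
Proof.
rewrite /hF -{3}(odd_double_half (M * M - M)) divn2 addnn.
suff -> : odd (M * M - M) = false by [].
have -> : (M * M - M = M * (M - 1))%N by rewrite mulnBr muln1.
case: M => [|n] //=.
by rewrite subn1 /= oddM /=; case: (odd n).
Qed.

(* s(p,q) with 1-based p = p0+1, q = q0+1 *)
Definition sidx (M p0 q0 : nat) : nat :=
  let p := p0.+1 in let q := q0.+1 in (p.-1 * M + q - (p * p.+1) %/ 2)%N.

(* entry k (0-based) of e_p^T (x) e_q^T + sg * e_q^T (x) e_p^T, p q 0-based *)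
Definition kronf (M : nat) (sg : algC) (p q k : nat) : algC :=
  (((k %/ M)%N == p) && ((k %% M)%N == q))%:R + sg * (((k %/ M)%N == q) && ((k %% M)%N == p))%:R.

(* row s(p,q) of the matrix is the (diagonal-removed) kron vector, for p<q *)
Definition Fpart (M : nat) (sg : algC) : 'M[algC]_(hF M, M * M - M) :=
  \matrix_(r, c) \sum_(p < M) \sum_(q < M | (p < q)%N && (sidx M p q == r.+1)%N)
      kronf M sg p q (nth 0%N (offd M) c).

Definition Fdd M := Fpart M 1.
Definition Ftilde M := Fpart M (-1).

Definition Fmx (M : nat) : 'M[algC]_(M * M - M) :=
  castmx (hF_double M, erefl) (2^-1 *: col_mx (Fdd M) ('i *: Ftilde M)).

(* Main.v *)
Require Import Defs.
From HB Require Import structures.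
From mathcomp Require Import all_boot all_order all_algebra.
From mathcomp Require Import algC.
From mathcomp Require Import zify ring.
Import Order.TTheory GRing.Theory Num.Theory.
Local Open Scope ring_scope.
Lemma Psi_unit D : Psi D \in unitmx.
Proof.
pose Q : 'M[algC]_(D.-1 + D.-1) := block_mx 1%:M 1%:M 'i%:M (- 'i)%:M.
have /mulmx1_unit[] // : Psi D *m (2^-1 *: Q) = 1%:M.
rewrite -scalemxAr /Psi /Q mulmx_block !mul_scalar_mx !scale_scalar_mx.
rewrite -!(raddfD (@scalar_mx algC _)) /=.
rewrite !mul1r !mulrN !mulNr -expr2 sqrCi opprK !subrr.
rewrite raddf0 -scalar_mx_block scale_scalar_mx mulVf //.
by rewrite pnatr_eq0.

Qed.
Lemma divmod_small M j i : (i < M)%N -> ((j * M + i) %/ M = j)%N /\ ((j * M + i) %% M = i)%N.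
Proof.
move=> iM; have M0 : (0 < M)%N by apply: leq_ltn_trans iM.
by rewrite divnMDl // divn_small // addn0 modnMDl modn_small.
Qed.

Lemma count_diag M j : (j <= M)%N ->
  count (fun k => k %% M == k %/ M)%N (iota 0 (j * M)) = j.
Proof.
elim: j => [|j IH] jM; first by rewrite mul0n.
rewrite mulSnr iotaD count_cat IH ?(ltnW jM) // add0n.
rewrite -[X in iota X]addn0 iotaDl count_map.
rewrite (@eq_in_count _ _ (pred1 j)); last first.
  move=> i; rewrite mem_iota add0n => /andP[_ iM] /=.
  by have [-> ->] := divmod_small _ j _ iM.
rewrite count_uniq_mem ?iota_uniq // mem_iota add0n jM.
by rewrite addn1.
Qed.

Lemma offd_size M : size (offd M) = (M * M - M)%N.
Proof.
rewrite /offd size_filter.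
have := count_predC (fun k => k %% M == k %/ M)%N (iota 0 (M * M)).
rewrite count_diag // size_iota => E.
by rewrite -{2}E addKn.
Qed.

Lemma offd_uniq M : uniq (offd M).
Proof. by rewrite filter_uniq // iota_uniq. Qed.

Lemma mem_offd M k : (k \in offd M) = (k < M * M)%N && (k %% M != k %/ M)%N.
Proof. by rewrite mem_filter mem_iota add0n andbC. Qed.
Lemma T2 p : ((p.+1 * p.+2) %/ 2 * 2 = p.+1 * p.+2)%N.
Proof.
apply/eqP; rewrite -dvdn_eq.
have [o|e] := boolP (odd p).
  by rewrite dvdn_mulr // dvdn2 /= negbK.
by rewrite dvdn_mull // dvdn2 /= e.
Qed.

Lemma sidx_range M p q : (p < q < M)%N -> (0 < sidx M p q <= hF M)%N.
Proof.
move=> /andP[pq qM]; rewrite /sidx /=.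
have := T2 p; have := hF_double M.
move: (hF M) ((p.+1 * p.+2) %/ 2)%N => h t.
nia.
Qed.

Lemma sidx_lt M p q p' q' : (p < q < M)%N -> (p' < q' < M)%N -> (p < p')%N ->
  (sidx M p q < sidx M p' q')%N.
Proof.
move=> /andP[pq qM] /andP[pq' qM'] pp'; rewrite /sidx /=.
have := T2 p; have := T2 p'.
move: ((p.+1 * p.+2) %/ 2)%N ((p'.+1 * p'.+2) %/ 2)%N => t t' e' e.
have le1 : (t <= p * M + q.+1)%N by nia.
have le2 : (t' <= p' * M + q'.+1)%N by nia.
suff : (t' + q < t + (p' - p) * M + q')%N.
  have -> : (p' * M = p * M + (p' - p) * M)%N by rewrite -mulnDl subnKC // ltnW.
  lia.
have [d Ed] : exists d, p' = (p + d.+1)%N by exists (p' - p.+1)%N; lia.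
subst p'.
have [f Ef] : exists f, M = (q.+1 + f)%N by exists (M - q.+1)%N; lia.
subst M.
have [g Eg] : exists g, q' = ((p + d.+1).+1 + g)%N by exists (q' - (p + d.+1).+1)%N; lia.
subst q'.
rewrite (_ : p + d.+1 - p = d.+1)%N; last by lia.
nia.
Qed.

Arguments sidx_lt {M p q p' q'}.

Lemma sidx_inj M p q p' q' : (p < q < M)%N -> (p' < q' < M)%N ->
  sidx M p q = sidx M p' q' -> p = p' /\ q = q'.
Proof.
move=> h1 h2 E.
have [lt|gt|eq] := ltngtP p p'.
- by have := sidx_lt h1 h2 lt; rewrite E ltnn.
- by have := sidx_lt h2 h1 gt; rewrite E ltnn.
subst p'; split => //.
move: E h1 h2; rewrite /sidx /=.
have := T2 p.
move: ((p.+1 * p.+2) %/ 2)%N => t.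
nia.
Qed.

Local Open Scope ring_scope.

Definition off M (c : nat) : nat := nth 0%N (offd M) c.

Lemma off_in M (c : 'I_(M * M - M)) : off M c \in offd M.
Proof. by apply: mem_nth; rewrite offd_size. Qed.

Lemma off_inj M (c c' : 'I_(M * M - M)) : (off M c == off M c') = (c == c').
Proof. by rewrite /off nth_uniq ?offd_size ?offd_uniq. Qed.

Lemma off_surj M k : k \in offd M -> {c : 'I_(M * M - M) | off M c = k}.
Proof.
move=> kin; have lt : (index k (offd M) < M * M - M)%N by rewrite -offd_size index_mem.
by exists (Ordinal lt); rewrite /off nth_index.
Qed.

Arguments off_in {M}.
Arguments off_surj {M k}.

Lemma divmod_eq M k a b : (b < M)%N ->
  ((k %/ M == a) && (k %% M == b))%N = (k == a * M + b)%N.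
Proof.
move=> bM; apply/idP/eqP.
  by case/andP => /eqP <- /eqP <-; rewrite -divn_eq.
by move->; have [-> ->] := divmod_small _ a _ bM; rewrite !eqxx.
Qed.

Lemma sidx_lt_hF M p q : (p < q < M)%N -> ((sidx M p q).-1 < hF M)%N.
Proof. by move/sidx_range => /andP[a b]; rewrite prednK. Qed.

Arguments sidx_lt_hF {M p q}.
Arguments sidx_inj {M p q p' q'}.
Arguments sidx_range {M p q}.

Lemma Fpart_entry M (sg : algC) p0 q0 (h : (p0 < q0 < M)%N) (c : 'I_(M * M - M)) :
  let r : 'I_(hF M) := Ordinal (sidx_lt_hF h) in
  Fpart M sg r c = ((off M c == p0 * M + q0)%N%:R + sg * (off M c == q0 * M + p0)%N%:R).
Proof.
move=> r; rewrite mxE pair_big_dep /=.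
have /andP[pq qM] := h.
have pM : (p0 < M)%N by apply: ltn_trans qM.
rewrite (big_pred1 (Ordinal pM, Ordinal qM)) /=; last first.
  case=> [[p pM'] [q qM']] /=; rewrite /r /=.
  apply/idP/idP.
    case/andP => pq' /eqP E.
    have := sidx_range h; case/andP => s0 _.
    have E' : sidx M p q = sidx M p0 q0 by rewrite E prednK.
    have h' : (p < q < M)%N by rewrite pq' qM'.
    have [ep eq] := sidx_inj h' h E'.
    subst.
    by rewrite xpair_eqE; apply/andP; split; apply/eqP; apply: val_inj.
  case/eqP => -> -> /=; rewrite pq /=.
  have := sidx_range h; case/andP => s0 _.
  by rewrite prednK.
by rewrite /kronf !divmod_eq.
Qed.

Lemma pair_in_offd M p q : (p < M)%N -> (q < M)%N -> p != q -> (p * M + q)%N \in offd M.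
Proof.
move=> pM qM pq; rewrite mem_offd.
have [-> ->] := divmod_small _ p _ qM.
rewrite eq_sym pq andbT; nia.
Qed.

Lemma off_dec M (c : 'I_(M * M - M)) :
  exists a b, [/\ (a < M)%N, (b < M)%N, a != b & off M c = (a * M + b)%N].
Proof.
have := off_in c; rewrite mem_offd => /andP[kM ne].
have M0 : (0 < M)%N by have := ltn_ord c; move: (nat_of_ord c) => i; nia.
exists (off M c %/ M)%N, (off M c %% M)%N; split.
- by rewrite ltn_divLR.
- by rewrite ltn_mod.
- by rewrite eq_sym.
- exact: divn_eq.
Qed.

Arguments off_dec {M}.
Arguments pair_in_offd {M p q}.

Lemma Fmx_unit M : Fmx M \in unitmx.
Proof.
rewrite -row_full_unit -sub1mx /Fmx.
apply/row_subP => c; rewrite row1.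
rewrite (eqmx_cast _ _) (eqmx_scale _ _); last by rewrite invr_eq0 pnatr_eq0.
rewrite -addsmxE.
have sT : (Ftilde M <= Fdd M + 'i *: Ftilde M)%MS.
  apply: submx_trans (addsmxSr _ _).
  by rewrite (eqmx_scale _ _) // neq0Ci.
have key : forall (p0 q0 : nat) (h : (p0 < q0 < M)%N) (x y : 'I_(M * M - M)),
    off M x = (p0 * M + q0)%N -> off M y = (q0 * M + p0)%N ->
    ((delta_mx 0 x : 'rV[algC]_(M * M - M)) <= Fdd M + 'i *: Ftilde M)%MS /\
    ((delta_mx 0 y : 'rV[algC]_(M * M - M)) <= Fdd M + 'i *: Ftilde M)%MS.
  move=> p0 q0 h x y ex ey.
  set r : 'I_(hF M) := Ordinal (sidx_lt_hF h).
  have u_in : (row r (Fdd M) <= Fdd M + 'i *: Ftilde M)%MS.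
    exact: submx_trans (row_sub _ _) (addsmxSl _ _).
  have v_in : (row r (Ftilde M) <= Fdd M + 'i *: Ftilde M)%MS.
    exact: submx_trans (row_sub _ _) sT.
  have FE := fun sg => @Fpart_entry M sg p0 q0 h.
  have ux : 'e_x = 2^-1 *: (row r (Fdd M) + row r (Ftilde M)) :> 'rV_(M * M - M).
    apply/rowP => j; rewrite /Fdd /Ftilde !(FE, mxE) -ex -ey !off_inj eqxx /=.
    move: ((j == x)%:R : algC) ((j == y)%:R : algC) => a b.
    by field.
  have uy : 'e_y = 2^-1 *: (row r (Fdd M) - row r (Ftilde M)) :> 'rV_(M * M - M).
    apply/rowP => j; rewrite /Fdd /Ftilde !(FE, mxE) -ex -ey !off_inj eqxx /=.
    move: ((j == x)%:R : algC) ((j == y)%:R : algC) => a b.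
    by field.
  by rewrite ux uy; split; apply: scalemx_sub; rewrite ?addmx_sub ?eqmx_opp.
have [a [b [aM bM ab ec]]] := off_dec c.
have [y ey] := off_surj (pair_in_offd bM aM (contra_neq esym ab)).
have [lt|gt] : (a < b)%N \/ (b < a)%N by case: ltngtP ab => // _; [left|right].
  by have [] := key a b (introT andP (conj lt bM)) c y ec ey.
by have [] := key b a (introT andP (conj gt aM)) y c ey ec.
Qed.

Section J.
Variables (M : nat) (m : 'I_M -> int).
Local Notation D := (Dnum m).

Lemma ells_sorted : sorted leq (ells m).
Proof. by rewrite /ells; apply: sort_sorted; exact: leq_total. Qed.

Lemma ells_uniq : uniq (ells m).
Proof. by rewrite /ells sort_uniq undup_uniq. Qed.

Lemma ell_inj n n' : (n < D)%N -> (n' < D)%N -> (ell m n == ell m n') = (n == n').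
Proof. by move=> h h'; rewrite /ell nth_uniq // ells_uniq. Qed.

Lemma ell_pos n : (0 < n < D)%N -> (0 < ell m n)%N.
Proof.
case/andP=> n0 nD; rewrite lt0n; apply/negP => /eqP e.
have le : (ell m 0 <= ell m n)%N.
  apply: (sorted_leq_nth leq_trans leqnn 0%N ells_sorted) => //;
    rewrite inE -/(Dnum m) //; exact: ltn_trans n0 nD.
have : ell m 0 == ell m n by rewrite e; move: le; rewrite e leqn0.
rewrite ell_inj ?(ltn_trans n0 nD) // => /eqP h.
by move: n0; rewrite -h.
Qed.

Lemma ell_pair n : (0 < n < D)%N -> exists p q : 'I_M, m p - m q = (ell m n)%:Z.
Proof.
move=> h; have nD : (n < D)%N by case/andP: h.
have : ell m n \in ells m by apply: mem_nth.
rewrite /ells mem_sort mem_undup => /allpairsP [[p q] [_ _ /= e]].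
have [pos|neg] := lerP 0 (m p - m q).
  by exists p, q; rewrite e gez0_abs.
by exists q, p; rewrite e ltz0_abs // opprB.
Qed.

Lemma mnE (i : 'I_M) : mn m i = m i.
Proof. by rewrite /mn valK. Qed.

End J.

Arguments ell_pair {M m n}.
Arguments ell_pos {M m n}.

Section J2.
Variables (M : nat) (m : 'I_M -> int).
Local Notation D := (Dnum m).

Lemma Jbar_entry (r : 'I_(M * M - M)) (c : 'I_(2 * D - 2)) :
  Jbar m r c = if (c < D.-1)%N
    then Lf m (D.-1 - c) (off M r %/ M) (off M r %% M)
    else Lf m (c.+1 - D.-1) (off M r %% M) (off M r %/ M).
Proof.
rewrite mxE /Jcol; case: (ltnP c D.-1) => h /=; first by rewrite h.
have h' : (c.+1 < D.-1)%N = false by apply/negbTE; rewrite -leqNgt (leq_trans h (leqnSn _)).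
by rewrite h' /vecf.
Qed.

Lemma Lf_pq n (p q : 'I_M) : Lf m n p q = (m p - m q == (ell m n)%:Z)%:R.
Proof. by rewrite /Lf !mnE. Qed.

Lemma Jbar_key (c : 'I_(2 * D - 2)) :
  exists r : 'I_(M * M - M), forall c', Jbar m r c' = (c == c')%:R.
Proof.
pose nc (c : nat) := if (c < D.-1)%N then (D.-1 - c)%N else (c.+1 - D.-1)%N.
have hn : forall c : 'I_(2 * D - 2), (0 < nc c < D)%N.
  move=> c0; have := ltn_ord c0; rewrite /nc; case: ifP => hh; lia.
have ninj : forall c c' : 'I_(2 * D - 2), ((c < D.-1) = (c' < D.-1))%N ->
    (nc c == nc c') = (c == c').
  move=> c0 c1 e; have := ltn_ord c0; have := ltn_ord c1.
  rewrite /nc -e -(inj_eq val_inj) /=; case: ifP => hh h1 h0; apply/eqP/eqP; lia.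
have [p [q e]] := ell_pair (hn c).
have pq : p != q.
  apply/eqP => E; have := ell_pos (hn c); rewrite -ltz_nat -e E subrr.
  by [].
pose k := if (c < D.-1)%N then (p * M + q)%N else (q * M + p)%N.
have kin : k \in offd M.
  rewrite /k; case: ifP => _; apply: pair_in_offd => //; exact: contra_neq esym pq.
have [r er] := off_surj kin.
exists r => c'; rewrite Jbar_entry er /k.
have [dq mq] := divmod_small _ p _ (ltn_ord q).
have [dp mp] := divmod_small _ q _ (ltn_ord p).
have epos := ell_pos (hn c).
case: (ifP (c < D.-1)%N) => hc; case: (ifP (c' < D.-1)%N) => hc'; rewrite ?dq ?mq ?dp ?mp Lf_pq.
- rewrite e eqz_nat (_ : (D.-1 - c')%N = nc c'); last by rewrite /nc hc'.
  rewrite ell_inj ?ninj ?hc ?hc' //; by [case/andP: (hn c) | case/andP: (hn c')].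
- have ne : (c == c') = false by apply/eqP => E; move: hc hc'; rewrite E => ->.
  rewrite ne -opprB e (introF eqP) // => hh; move: epos; lia.
- have ne : (c == c') = false by apply/eqP => E; move: hc hc'; rewrite E => ->.
  rewrite ne -opprB e (introF eqP) // => hh; move: epos; lia.
- rewrite e eqz_nat (_ : (c'.+1 - D.-1)%N = nc c'); last by rewrite /nc hc'.
  rewrite ell_inj ?ninj ?hc ?hc' //; by [case/andP: (hn c) | case/andP: (hn c')].
Qed.

End J2.

Lemma Jbar_rank M (m : 'I_M -> int) : \rank (Jbar m) = (2 * Dnum m - 2)%N.
Proof.
have [f hf] := fin_all_exists (@Jbar_key M m).
have E : rowsub f (Jbar m) = 1%:M by apply/matrixP => i j; rewrite [LHS]mxE [RHS]mxE hf.
apply/eqP; rewrite eqn_leq rank_leq_col /=.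
rewrite -{1}(mxrank1 algC (2 * Dnum m - 2)) -E rowsubE; exact: mxrankM_maxr.
Qed.

Theorem lemma2 (M : nat) (m : 'I_M -> int) (hm : injective m) :
  Psi (Dnum m) \in unitmx /\ Fmx M \in unitmx /\
  \rank (Jbar m) = (2 * Dnum m - 2)%N.
Proof. by split; [exact: Psi_unit | split; [exact: Fmx_unit | exact: Jbar_rank]]. Qed.
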